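(* Let $G$ and $G'$ be deterministic finite automata over the alphabet $\Sigma$, let $\Sigma_o\subseteq\Sigma$, and let $H:=T_{\Sigma_o}(G)$ and $H':=T_{\Sigma_o}(G')$. If $G'\sqsubseteq G$, then $H'\,\tilde{\sqsubseteq}\,H$.
   Context: A DFA $G=(Q,\Sigma,\delta_G,q_0,Q_m)$ has finite state set $Q$, alphabet $\Sigma$, partial transition function $\delta_G$ (extended to strings), initial state $q_0$, marked states $Q_m$; $L(G)$ is the set of strings $s$ with $\delta_G(q_0,s)$ defined. $P_{\Sigma_o}$ is the natural projection $\Sigma^*\to\Sigma_o^*$ erasing events outside $\Sigma_o$. The $\epsilon$-reach of $q$ is $\epsilon R_G(q)=\{\delta_G(q,s): s\in\Sigma^*, P_{\Sigma_o}(s)=\epsilon, \delta_G(q,s)\text{ defined}\}$. The observer $T_{\Sigma_o}(G)$ is the DFA over $\Sigma_o$ whose states are subsets of $Q$, with initial state $\epsilon R_G(q_0)$ and transition function $\delta_H(B,\sigma)=\bigcup_{q\in B,\ \delta_G(q,\sigma)\text{ defined}}\epsilon R_G(\delta_G(q,\sigma))$ (defined iff this union is nonempty), restricted to its states reachable from the initial state; a state $B$ is marked iff $B\subseteq Q_m$. $G'$ is a subautomaton of $G$, $G'\sqsubseteq G$, if $\delta_{G'}(q'_0,s)=\delta_G(q_0,s)$ for all $s\in L(G')$ (with $q'_0$ the initial state of $G'$). For automata whose states are sets, $H'$ is a subobserver of $H$, $H'\,\tilde{\sqsubseteq}\,H$, if $\delta_{H'}(h'_0,s)\subseteq\delta_H(h_0,s)$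 for all $s\in L(H')$, where $h_0,h'_0$ are the respective initial states. *)

(* Defs.v *)
From mathcomp Require Import all_boot.
From Stdlib Require Import ClassicalDescription.

Set Implicit Arguments.
Unset Strict Implicit.
Unset Printing Implicit Defensive.

Record dfa (Q Sigma : Type) := DFA {
  delta : Q -> Sigma -> option Q;
  init : Q;
  marked : Q -> Prop
}.

Fixpoint deltaS (Q Sigma : Type) (d : Q -> Sigma -> option Q) (q : Q)
  (s : seq Sigma) : option Q :=
  match s with
  | [::] => Some q
  | a :: s' => match d q a with
               | Some q' => deltaS d q' s'
               | None => None
               end
  end.

Definition lang (Q Sigma : Type) (G : dfa Q Sigma) (s : seq Sigma) : Prop :=
  deltaS (delta G) (init G) s <> None.

Definition proj (Sigma : Type) (So : pred Sigma) (s : seq Sigma) : seq Sigma :=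
  filter So s.

Definition eps_reach (Q Sigma : Type) (G : dfa Q Sigma) (So : pred Sigma)
  (q : Q) : Q -> Prop :=
  fun q' => exists s : seq Sigma,
      proj So s = [::] /\ deltaS (delta G) q s = Some q'.

(* observer transition: defined only on observable events, and only when
   the resulting union of epsilon-reaches is nonempty *)
Definition obs_step (Q Sigma : Type) (G : dfa Q Sigma) (So : pred Sigma)
  (B : Q -> Prop) (a : Sigma) : option (Q -> Prop) :=
  let B' := fun q' => exists q q1,
        B q /\ delta G q a = Some q1 /\ eps_reach G So q1 q' in
  if So a then
    if excluded_middle_informative (exists q', B' q') then Some B' else None
  else None.

Definition observer (Q Sigma : Type) (So : pred Sigma) (G : dfa Q Sigma)
  : dfa (Q -> Prop) Sigma :=
  {| delta := obs_step G So;
     init := eps_reach G So (init G);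
     marked := fun B => forall q, B q -> marked G q |}.

Definition subautomaton (Q Sigma : Type) (G' G : dfa Q Sigma) : Prop :=
  forall s, lang G' s ->
    deltaS (delta G') (init G') s = deltaS (delta G) (init G) s.

Definition subobserver (Q Sigma : Type) (H' H : dfa (Q -> Prop) Sigma) : Prop :=
  forall s, lang H' s ->
    exists B' B, deltaS (delta H') (init H') s = Some B' /\
                 deltaS (delta H) (init H) s = Some B /\
                 (forall q, B' q -> B q).

(* Main.v *)
Require Import Defs.
From mathcomp Require Import all_boot.
From Stdlib Require Import ClassicalDescription.

Lemma deltaS_cat (Q Sigma : Type) (d : Q -> Sigma -> option Q) q s1 s2 :
  deltaS d q (s1 ++ s2) =
  match deltaS d q s1 with Some q' => deltaS d q' s2 | None => None end.
Proof.
elim: s1 q => [|a s1 IH] q //=.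
case: (d q a) => // q'.
Qed.

Lemma reach (Q Sigma : Type) (G G' : dfa Q Sigma) :
  subautomaton G' G -> forall t q, deltaS (delta G') (init G') t = Some q ->
  forall s q', deltaS (delta G') q s = Some q' ->
  deltaS (delta G) q s = Some q' /\ deltaS (delta G') (init G') (t ++ s) = Some q'.
Proof.
move=> Hsub t q Ht s q' Hs.
have E : deltaS (delta G') (init G') (t ++ s) = Some q' by rewrite deltaS_cat Ht.
split=> //.
have L1 : lang G' t by rewrite /lang Ht.
have L2 : lang G' (t ++ s) by rewrite /lang E.
have := Hsub _ L2; rewrite E deltaS_cat -(Hsub _ L1) Ht => <-; done.
Qed.

Theorem theorem1 (Q Sigma : finType) (So : pred Sigma) (G G' : dfa Q Sigma) :
  subautomaton G' G -> subobserver (observer So G') (observer So G).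
Proof.
move=> Hsub.
suff main : forall s (B' B : Q -> Prop),
  (forall q, B' q -> B q /\ exists t, deltaS (delta G') (init G') t = Some q) ->
  deltaS (delta (observer So G')) B' s <> None ->
  exists B'1 B1, deltaS (delta (observer So G')) B' s = Some B'1 /\
                 deltaS (delta (observer So G)) B s = Some B1 /\
                 (forall q, B'1 q -> B1 q).
  move=> s Hs; apply: main Hs => q [s0 [Hp Hd]].
  have Ht0 : deltaS (delta G') (init G') [::] = Some (init G') by [].
  have [H1 _] := @reach _ _ G G' Hsub _ _ Ht0 _ _ Hd.
  have Hi : init G' = init G.
    have L0 : lang G' [::] by rewrite /lang.
    by have := Hsub _ L0; case.
  split; [exists s0; split=> //; by rewrite -Hi | by exists s0].
elim=> [|a s IH] B' B Hinv /=.
  move=> _; exists B', B; do 2!split=> //; by move=> q /Hinv [].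
rewrite /obs_step.
case Ha: (So a) => //.
case: excluded_middle_informative => [[q0 Hq0]|] //= Hne.
set B1 := fun q' => exists q q1, B q /\ delta G q a = Some q1 /\ eps_reach G So q1 q'.
have Hinv1 : forall q', (fun q' => exists q q1, B' q /\ delta G' q a = Some q1 /\
      eps_reach G' So q1 q') q' -> B1 q' /\ exists t, deltaS (delta G') (init G') t = Some q'.
  move=> q' [q [q1 [HB' [Hd [s0 [Hp Hs0]]]]]].
  have [HB [t Ht]] := Hinv _ HB'.
  have Hd' : deltaS (delta G') q [:: a] = Some q1 by rewrite /= Hd.
  have [Hg1 Ht1] := @reach _ _ G G' Hsub _ _ Ht _ _ Hd'.
  have [Hg2 Ht2] := @reach _ _ G G' Hsub _ _ Ht1 _ _ Hs0.
  split; last by exists ((t ++ [:: a]) ++ s0).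
  exists q, q1; split=> //; split; last by exists s0.
  by move: Hg1 => /=; case: (delta G q a) => // ? ->.
case: (excluded_middle_informative (exists y, B1 y)) => [_|[]] /=; last first.
  by exists q0; case: (Hinv1 _ Hq0).
exact: (IH _ B1 Hinv1 Hne).
Qed.
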